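(* Let $\mathbb Z\langle X\rangle$ be the free unital associative ring on $X=\{x_1,x_2,\dots\}$ and let $I$ be the left ideal of $\mathbb Z\langle X\rangle$ generated by a set $S\subset\Gamma$; let $\Gamma\cdot S$ be the left ideal of $\Gamma$ generated by $S$. Then the additive group $\mathbb Z\langle X\rangle/I$ is isomorphic to \[\Gamma/(\Gamma\cdot S)\;\oplus\bigoplus_{s\ge1;\ i_1\le\dots\le i_s}(x_{i_1}\cdots x_{i_s}\Gamma)/(x_{i_1}\cdots x_{i_s}\Gamma\cdot S),\] and for all $s\ge1$, $i_1\le\dots\le i_s$, the group $(x_{i_1}\cdots x_{i_s}\Gamma)/(x_{i_1}\cdots x_{i_s}\Gamma\cdot S)$ is isomorphic to $\Gamma/(\Gamma\cdot S)$ via the isomorphism induced by $f\mapsto x_{i_1}\cdots x_{i_s}f$ ($f\in\Gamma$).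
   Context: $\Gamma$ is the unital subring of $\mathbb Z\langle X\rangle$ generated by all left-normed commutators $[x_{i_1},\dots,x_{i_l}]$ with $l\ge2$ (where $[a,b]=ab-ba$, $[a_1,\dots,a_n]=[[a_1,\dots,a_{n-1}],a_n]$). *)

(* Defs.v *)
From HB Require Import structures.
From mathcomp Require Import all_boot all_order all_algebra.
From mathcomp Require Import finmap.
From mathcomp.multinomials Require Import monalg.

Set Implicit Arguments.
Unset Strict Implicit.
Unset Printing Implicit Defensive.

Import GRing.Theory.
Local Open Scope ring_scope.

(* The free unital associative ring Z<X> on X = {x_0, x_1, ...}:
   the monoid ring over int of the free monoid on nat. *)
Definition ZX := {malg int[{fmonom nat}]}.

Definition xv (i : nat) : ZX := << fmu i >>.

Definition xprod (s : seq nat) : ZX := \prod_(i <- s) xv i.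

Definition comm (a b : ZX) : ZX := a * b - b * a.

Definition lncomm (s : seq nat) : ZX :=
  match s with
  | [::] => 0
  | i :: t => foldl (fun c j => comm c (xv j)) (xv i) t
  end.

Inductive Gamma : ZX -> Prop :=
  | Gamma_gen (s : seq nat) : (2 <= size s)%N -> Gamma (lncomm s)
  | Gamma_one : Gamma 1
  | Gamma_sub a b : Gamma a -> Gamma b -> Gamma (a - b)
  | Gamma_mul a b : Gamma a -> Gamma b -> Gamma (a * b).

(* With A = (fun _ => True)
   this is the left ideal I of Z<X> generated by S; with A = Gamma it is
   the left ideal Gamma . S of Gamma generated by S. *)
Inductive lideal_gen (A S : ZX -> Prop) : ZX -> Prop :=
  | lideal_gen_S s : S s -> lideal_gen A S s
  | lideal_gen_0 : lideal_gen A S 0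
  | lideal_gen_sub a b : lideal_gen A S a -> lideal_gen A S b ->
                         lideal_gen A S (a - b)
  | lideal_gen_mul g a : A g -> lideal_gen A S a -> lideal_gen A S (g * a).

Definition lmulset (w : ZX) (P : ZX -> Prop) : ZX -> Prop :=
  fun y => exists2 f, P f & y = w * f.

(* f : V -> W induces an isomorphism of abelian groups A/B ~= C/D
   (A, B subgroups of V with B <= A, and C, D subgroups of W with D <= C):
   f maps A into C, is additive modulo D on A (so it defines a group
   homomorphism A -> C/D), this homomorphism is onto C/D, and its kernel
   is exactly B. *)
Definition induces_quot_iso (V W : zmodType) (A B : V -> Prop)
    (C D : W -> Prop) (f : V -> W) : Prop :=
  [/\ (forall x, A x -> C (f x)),
      (forall x y, A x -> A y -> D (f (x + y) - (f x + f y))),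
      (forall y, C y -> exists2 x, A x & D (y - f x)) &
      (forall x, A x -> (D (f x) <-> B x))].

Definition quot_iso (V W : zmodType) (A B : V -> Prop) (C D : W -> Prop) :=
  exists f : V -> W, induces_quot_iso A B C D f.

(* The external direct sum of the groups indexed by nondecreasing sequences
   w = (i_1 <= ... <= i_s), s >= 0, realized as finitely supported families
   F : {malg ZX[seq nat]} (F@_w is the w-component), with F@_w = 0 for
   non-sorted w. *)
Definition DS := {malg ZX[seq nat]}.

Definition dsum (C : seq nat -> ZX -> Prop) : DS -> Prop :=
  fun F => forall w : seq nat,
    (sorted leq w -> C w (F@_w)) /\ (~~ sorted leq w -> F@_w = 0).

(* Main.v *)
Require Import Defs.
From HB Require Import structures.
From mathcomp Require Import all_boot all_order all_algebra.
From mathcomp Require Import finmap.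
From mathcomp.multinomials Require Import monalg.
From mathcomp Require Import zify.
From Stdlib Require Import ClassicalEpsilon.
Set Implicit Arguments. Unset Strict Implicit.
Import GRing.Theory.
Local Open Scope ring_scope.

Lemma xprod_nil : xprod [::] = 1. Proof. by rewrite /xprod big_nil. Qed.
Lemma xprod_cons a r : xprod (a :: r) = xv a * xprod r. Proof. by rewrite /xprod big_cons. Qed.
Lemma xprod_cat r s : xprod (r ++ s) = xprod r * xprod s. Proof. by rewrite /xprod big_cat. Qed.

Lemma xprodE s : xprod s = << FMonom s >> :> ZX.
Proof.
elim: s => [|a s IH].
  rewrite xprod_nil; congr (<< _ >>); apply/val_inj; by rewrite /= fm1.
rewrite xprod_cons IH /xv malgM_def fgmulUU mulr1; congr (<< _ *g _>>).
by apply/val_inj; rewrite /= fmM fmU.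
Qed.

Lemma monoE (m : {fmonom nat}) : << m >> = xprod (val m) :> ZX.
Proof. by rewrite xprodE fmK. Qed.

Opaque xprod xv.

Lemma ZX_ind (P : ZX -> Prop) : P 0 -> (forall x y, P x -> P y -> P (x - y)) ->
  (forall m, P << m >>) -> forall p, P p.
Proof.
move=> P0 Psub Pm.
have Padd x y : P x -> P y -> P (x + y).
  move=> Px Py; have -> : x + y = x - (0 - y) by rewrite sub0r opprK.
  by apply: (Psub) => //; apply: (Psub).
have Pn x n : P x -> P (x *+ n).
  by move=> Px; elim: n => [|n IH]; rewrite ?mulr0n // mulrS; apply: (Padd).
have Pz x z : P x -> P (x *~ z).
  move=> Px; case: z => n /=; first exact: (Pn).
  rewrite NegzE mulrNz -sub0r; apply: (Psub) => //; exact: (Pn).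
move=> p; rewrite (monalgE p); apply: big_ind => //.
move=> m _; have -> : << p@_m *g m >> = << (1:int) *g m >> *~ p@_m.
  by rewrite -(raddfMz (mkmalgU m)) /= intz.
exact: (Pz).
Qed.

Fixpoint dmonS (i : nat) (s : seq nat) : ZX :=
  match s with
  | [::] => 0
  | a :: r => (a == i)%:R * xprod r + xv a * dmonS i r
  end.

Definition D (i : nat) (p : ZX) : ZX :=
  mmap (intr : int -> ZX) (fun m : {fmonom nat} => dmonS i (val m)) p.

Lemma DB i x y : D i (x - y) = D i x - D i y.
Proof. exact: mmapB. Qed.
Lemma D0 i : D i 0 = 0.
Proof. exact: mmap0. Qed.
Lemma DD i x y : D i (x + y) = D i x + D i y.
Proof. exact: mmapD. Qed.
Lemma DMn i x n : D i (x *+ n) = D i x *+ n.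
Proof. exact: mmapMn. Qed.

Lemma Dmono i (m : {fmonom nat}) : D i << m >> = dmonS i (val m).
Proof. by rewrite /D mmapU /= mulr1z mul1r. Qed.

Lemma Dxprod i s : D i (xprod s) = dmonS i s.
Proof. by rewrite xprodE Dmono. Qed.

Lemma ringid1 (R : ringType) (n xr xs xa dr ds : R) :
  n*(xr*xs) + xa*(dr*xs + xr*ds) = (n*xr + xa*dr)*xs + xa*xr*ds.
Proof. by rewrite mulrDr mulrDl !mulrA addrA. Qed.

Lemma dmonS_cat i r s :
  dmonS i (r ++ s) = dmonS i r * xprod s + xprod r * dmonS i s.
Proof.
elim: r => [|a r IH] /=; first by rewrite mul0r add0r xprod_nil mul1r.
rewrite IH xprod_cat xprod_cons; exact: ringid1.
Qed.



Lemma leib_l (R : ringType) (D : R -> R) (DB : forall a b, D (a - b) = D a - D b)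
  x y q : D (x*q) = D x * q + x * D q -> D (y*q) = D y * q + y * D q ->
  D ((x - y)*q) = D (x - y) * q + (x - y) * D q.
Proof. by move=> Hx Hy; rewrite mulrBl !DB Hx Hy !mulrBl opprD addrACA. Qed.
Lemma leib_r (R : ringType) (D : R -> R) (DB : forall a b, D (a - b) = D a - D b)
  p x y : D (p*x) = D p * x + p * D x -> D (p*y) = D p * y + p * D y ->
  D (p*(x - y)) = D p * (x - y) + p * D (x - y).
Proof. by move=> Hx Hy; rewrite mulrBr !DB Hx Hy !mulrBr opprD addrACA. Qed.
Lemma leib_0l (R : ringType) (D : R -> R) (D0 : D 0 = 0) q : D (0*q) = D 0 * q + 0 * D q.
Proof. by rewrite !mul0r D0 mul0r addr0. Qed.
Lemma leib_0r (R : ringType) (D : R -> R) (D0 : D 0 = 0) p : D (p*0) = D p * 0 + p * D 0.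
Proof. by rewrite !mulr0 D0 mulr0 addr0. Qed.

Lemma DM i p q : D i (p * q) = D i p * q + p * D i q.
Proof.
elim/ZX_ind: p q => [|x y IHx IHy|m1] q.
- exact: (leib_0l (D0 i)).
- exact: (leib_l (DB i) (IHx q) (IHy q)).
elim/ZX_ind: q => [|x y IHx IHy|m2].
- exact: (leib_0r (D0 i)).
- exact: (leib_r (DB i) IHx IHy).
rewrite !monoE -xprod_cat !Dxprod; exact: dmonS_cat.
Qed.



Lemma Dxv i j : D i (xv j) = (j == i)%:R.
Proof.
rewrite -[xv j]mulr1 -xprod_nil -xprod_cons Dxprod /=.
by rewrite xprod_nil mulr1 mulr0 addr0.
Qed.

Lemma D1 i : D i 1 = 0.
Proof. by rewrite -xprod_nil Dxprod. Qed.

Lemma comm_leib (R : ringType) (D : R -> R) (DB : forall a b, D (a - b) = D a - D b)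
  (DM : forall a b, D (a * b) = D a * b + a * D b) c x n :
  D x = n%:R -> D (c * x - x * c) = D c * x - x * D c.
Proof.
move=> Dx; rewrite DB !DM Dx.
have -> : c * n%:R = n%:R * c by rewrite mulr_natl mulr_natr.
by rewrite opprD addrA addrK.
Qed.

Lemma Dcomm i c j : D i (comm c (xv j)) = comm (D i c) (xv j).
Proof. exact: (comm_leib (DB i) (DM i) c (Dxv i j)). Qed.

Lemma comm_nat0 (R : ringType) n (x : R) : n%:R * x - x * n%:R = 0.
Proof. by rewrite mulr_natl mulr_natr subrr. Qed.
Lemma comm_00 (R : ringType) (x : R) : 0 * x - x * 0 = 0.
Proof. by rewrite mul0r mulr0 subrr. Qed.

Definition Kp (p : ZX) := forall i, D i p = 0.

Lemma K_foldl i t : forall c, D i c = 0 ->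
  D i (foldl (fun c j => comm c (xv j)) c t) = 0.
Proof.
elim: t => [|j t IH] c Hc; first exact: Hc.
apply: (IH (comm c (xv j))); rewrite Dcomm Hc; exact: comm_00.
Qed.

Lemma Gamma_K p : Gamma p -> Kp p.
Proof.
elim=> [s hs|| a b _ Ha _ Hb | a b _ Ha _ Hb] i.
- case: s hs => [|a [|b t]] // _.
  change (D i (foldl (fun c j => comm c (xv j)) (comm (xv a) (xv b)) t) = 0).
  apply: K_foldl; rewrite Dcomm Dxv; exact: comm_nat0.
- exact: D1.
- by rewrite DB Ha Hb subrr.
- by rewrite DM Ha Hb mul0r mulr0 addr0.
Qed.



Lemma dmonS_cons i a r : dmonS i (a :: r) = (a == i)%:R * xprod r + xv a * dmonS i r.
Proof. by []. Qed.

Lemma abs1 (R : ringType) (x y z : R) c : x = y * z -> x + y * (z *+ c) = x *+ c.+1.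
Proof. by move=> ->; rewrite mulrnAr mulrS. Qed.
Lemma abs2 (R : ringType) (x y z : R) : x + y * (z *+ 0) = x *+ 1.
Proof. by rewrite mulr0n mulr0 addr0 mulr1n. Qed.

Lemma dmonS_sorted i w : sorted leq w ->
  dmonS i w = xprod (rem i w) *+ count_mem i w.
Proof.
elim: w => [|a r IH] Hs; first by rewrite mulr0n.
have Hr := path_sorted Hs.
rewrite dmonS_cons (IH Hr).
case: (eqVneq a i) => [<-|ne].
  have -> : rem a (a :: r) = r by rewrite rem_cons eqxx.
  have -> : count_mem a (a :: r) = (count_mem a r).+1 by rewrite /= eqxx.
  rewrite mul1r.
  case: (posnP (count_mem a r)) => [->|cp].
    exact: abs2.
  have : a \in r by rewrite -has_pred1 has_count.
  case: r Hs Hr {IH} cp => [|b r'] // /andP[hab Hp] Hr cp.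
  rewrite in_cons => /orP[/eqP eab|ar'].
    rewrite -eab rem_cons eqxx; apply: abs1; exact: xprod_cons.
  have hba : (b <= a)%N.
    by move: Hr; rewrite /= (path_sortedE leq_trans) => /andP[/allP /(_ _ ar')].
  have eab : b = a by apply/eqP; rewrite eqn_leq hba hab.
  rewrite eab rem_cons eqxx; apply: abs1; exact: xprod_cons.
have -> : rem i (a :: r) = a :: rem i r by rewrite rem_cons (negbTE ne).
have -> : count_mem i (a :: r) = count_mem i r by rewrite /= (negbTE ne).
by rewrite mul0r add0r xprod_cons mulrnAr.
Qed.



Lemma ZX_torsionfree (p : ZX) n : (0 < n)%N -> p *+ n = 0 -> p = 0.
Proof.
move=> n0 H; apply/malgP => m; have := congr1 (mcoeff m) H.
rewrite mcoeffMn mcoeff0 => /eqP; rewrite Num.Theory.mulrn_eq0 => /orP[/eqP n00|/eqP //].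
by rewrite n00 in n0.
Qed.

Lemma D_sum i (L : seq (seq nat)) (F : seq nat -> ZX) :
  D i (\sum_(w <- L) F w) = \sum_(w <- L) D i (F w).
Proof. by apply: big_morph; [exact: DD | exact: D0]. Qed.

Definition mu (L : seq (seq nat)) := (\sum_(w <- L) (size w).+1)%N.

Lemma mu_split (P : pred (seq nat)) L :
  mu L = (mu [seq w <- L | P w] + mu [seq w <- L | ~~ P w])%N.
Proof. by rewrite /mu !big_filter [LHS](bigID P). Qed.

Lemma mu_size L : mu L = (\sum_(w <- L) size w + size L)%N.
Proof. rewrite /mu -sum1_size -big_split /=. by apply: eq_bigr => w _; rewrite addn1. Qed.

Lemma insK i w : sorted leq w -> i \in w -> sort leq (i :: rem i w) = w.
Proof.
move=> sw iw.
have p : perm_eq (i :: rem i w) w by rewrite perm_sym perm_to_rem.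
rewrite (perm_sortP leq_total leq_trans anti_leq _ _ p).
exact: (sorted_sort leq_trans sw).
Qed.

Lemma rem_sorted i w : sorted leq w -> sorted leq (rem i w).
Proof. by move=> sw; apply: (subseq_sorted leq_trans (rem_subseq _ _) sw). Qed.

Lemma abs3 (R : ringType) (x g y : R) c : (x *+ c) * g + y * 0 = x * (g *+ c).
Proof. by rewrite mulr0 addr0 mulrnAl mulrnAr. Qed.

Lemma D_term i w g : sorted leq w -> Kp g ->
  D i (xprod w * g) = xprod (rem i w) * (g *+ count_mem i w).
Proof. move=> sw Kg; rewrite DM (Kg i) Dxprod dmonS_sorted //; exact: abs3. Qed.

Lemma indep n : forall (L : seq (seq nat)) (g : seq nat -> ZX),
  (mu L < n)%N -> uniq L -> (forall w, w \in L -> sorted leq w) ->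
  (forall w, w \in L -> Kp (g w)) ->
  \sum_(w <- L) xprod w * g w = 0 -> forall w, w \in L -> g w = 0.
Proof.
elim: n => [|n IHn] L g; first by [].
move=> Hmu Hu Hs HK Hsum.
case: (boolP (has (fun w => w != [::]) L)) => [/hasP [w0 w0L nw0] | /hasPn allnil].
  case: w0 w0L nw0 => [|i t] // w0L _.
  have iw0 : i \in i :: t by rewrite mem_head.
  have [L1 eL1] : {L1 | L1 = [seq w <- L | i \in w]} by exists [seq w <- L | i \in w].
  have [L2 eL2] : {L2 | L2 = [seq w <- L | i \notin w]} by exists [seq w <- L | i \notin w].
  have w0L1 : i :: t \in L1 by rewrite eL1 mem_filter iw0 w0L.
  have Hmu12 : mu L = (mu L1 + mu L2)%N by rewrite eL1 eL2; exact: mu_split.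
  have sL1 : (0 < size L1)%N by case: (L1) w0L1.
  have mu1pos : (0 < mu L1)%N by rewrite mu_size addn_gt0 sL1 orbT.
  pose g' v := g (sort leq (i :: v)) *+ count_mem i (sort leq (i :: v)).
  have HL1 w : w \in L1 -> sort leq (i :: rem i w) = w /\ w \in L /\ i \in w.
    rewrite eL1 mem_filter => /andP[iw wL]; split; last by [].
    exact: (insK (Hs _ wL) iw).
  have H1 : forall w, w \in L1 -> g w = 0.
    have Hlt : (mu (map (rem i) L1) < mu L1)%N.
      rewrite [X in (_ < X)%N]mu_size /mu big_map.
      rewrite (eq_big_seq (fun w => size w)) => [|w wL1]; first by rewrite -[X in (X < _)%N]addn0 ltn_add2l.
      have iw := (HL1 w wL1).2.2.
      by rewrite size_rem // prednK //; case: (w) iw.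
    have Hmu' : (mu (map (rem i) L1) < n)%N by move: Hlt Hmu; rewrite Hmu12; lia.
    have Hu' : uniq (map (rem i) L1).
      rewrite map_inj_in_uniq ?eL1 ?filter_uniq // => u v uL vL e.
      by rewrite -eL1 in uL vL; rewrite -(HL1 u uL).1 -(HL1 v vL).1 e.
    have Hs' v : v \in map (rem i) L1 -> sorted leq v.
      by case/mapP => w wL1 ->; apply: rem_sorted; apply: (Hs _ (HL1 w wL1).2.1).
    have HK' v : v \in map (rem i) L1 -> Kp (g' v).
      case/mapP => w wL1 -> j; rewrite /g' (HL1 w wL1).1 DMn.
      by rewrite (HK _ (HL1 w wL1).2.1 j) mul0rn.
    have Hsum' : \sum_(v <- map (rem i) L1) xprod v * g' v = 0.
      have E1 : D i (\sum_(w <- L) xprod w * g w) =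
          \sum_(w <- L) xprod (rem i w) * (g w *+ count_mem i w).
        rewrite D_sum big_seq [RHS]big_seq; apply: eq_bigr => w wL.
        exact: (D_term i (Hs _ wL) (HK _ wL)).
      have E2 : \sum_(w <- L) xprod (rem i w) * (g w *+ count_mem i w) =
          \sum_(w <- L1) xprod (rem i w) * (g w *+ count_mem i w).
        rewrite eL1 big_filter [LHS](bigID (fun w => i \in w)) /=.
        rewrite [X in _ + X = _]big1 ?addr0 // => w /negbTE iw.
        have -> : count_mem i w = 0%N by apply/eqP; rewrite -leqn0 leqNgt -has_count has_pred1 iw.
        by rewrite mulr0n mulr0.
      have E3 : \sum_(v <- map (rem i) L1) xprod v * g' v =
          \sum_(w <- L1) xprod (rem i w) * (g w *+ count_mem i w).
        rewrite big_map big_seq [RHS]big_seq; apply: eq_bigr => w wL1.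
        by rewrite /g' (HL1 w wL1).1.
      by rewrite E3 -E2 -E1 Hsum D0.
    have := IHn (map (rem i) L1) g' Hmu' Hu' Hs' HK' Hsum'.
    move=> H w wL1.
    have := H _ (map_f (rem i) wL1); rewrite /g' (HL1 w wL1).1.
    apply: ZX_torsionfree; rewrite -has_count has_pred1; exact: (HL1 w wL1).2.2.
  have Hsum2 : \sum_(w <- L2) xprod w * g w = 0.
    rewrite eL2 big_filter; move: Hsum; rewrite [LHS](bigID (fun w => i \in w)) /=.
    rewrite big_seq_cond big1 ?add0r // => w /andP[wL iw].
    by rewrite H1 ?mulr0 // eL1 mem_filter iw wL.
  have Hmu2 : (mu L2 < n)%N by move: mu1pos Hmu; rewrite Hmu12; lia.
  have H2 := IHn L2 g Hmu2 (eq_ind_r uniq (filter_uniq _ Hu) eL2).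
  have sub2 : {subset L2 <= L} by rewrite eL2; apply: mem_subseq; exact: filter_subseq.
  have := H2 (fun w wL2 => Hs w (sub2 w wL2)) (fun w wL2 => HK w (sub2 w wL2)) Hsum2.
  move=> {}H2 w wL; case: (boolP (i \in w)) => iw.
    by apply: H1; rewrite eL1 mem_filter iw.
  by apply: H2; rewrite eL2 mem_filter iw.
case: L Hu Hs HK Hsum allnil {Hmu} => [|w L'] // /andP[wL' uL'] Hs HK Hsum allnil.
have w0 : w = [::] by apply/eqP; rewrite -[_ == _]negbK allnil ?mem_head.
case: L' wL' uL' Hs HK Hsum allnil => [|v L''] wL' uL' Hs HK Hsum allnil.
  move: Hsum; rewrite big_seq1 w0 xprod_nil mul1r => H v.
  by rewrite inE => /eqP ->.
have v0 : v = [::] by apply/eqP; rewrite -[_ == _]negbK allnil // !inE eqxx orbT.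
by move: wL'; rewrite w0 v0 mem_head.
Qed.

Lemma indep_all (L : seq (seq nat)) (g : seq nat -> ZX) :
  uniq L -> (forall w, w \in L -> sorted leq w) ->
  (forall w, w \in L -> Kp (g w)) ->
  \sum_(w <- L) xprod w * g w = 0 -> forall w, w \in L -> g w = 0.
Proof. exact: (@indep (mu L).+1). Qed.



Definition Span (P : seq nat -> Prop) (T : ZX -> Prop) (p : ZX) :=
  exists l : seq (seq nat * ZX), (forall x, x \in l -> P x.1 /\ T x.2) /\
    p = \sum_(x <- l) xprod x.1 * x.2.

Lemma Span0 P T : Span P T 0.
Proof. by exists [::]; split => //; rewrite big_nil. Qed.

Lemma SpanD P T p q : Span P T p -> Span P T q -> Span P T (p + q).
Proof.
move=> [l1 [H1 ->]] [l2 [H2 ->]]; exists (l1 ++ l2); rewrite big_cat; split => //.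
by move=> x; rewrite mem_cat => /orP[/H1|/H2].
Qed.

Lemma Span1 (P : seq nat -> Prop) (T : ZX -> Prop) w g : P w -> T g -> Span P T (xprod w * g).
Proof.
by move=> Pw Tg; exists [:: (w, g)]; rewrite big_seq1; split => // x; rewrite inE => /eqP ->.
Qed.

Lemma Span_map P T P' T' (F : ZX -> ZX) p :
  (forall x y, F (x + y) = F x + F y) -> F 0 = 0 ->
  (forall w g, P w -> T g -> Span P' T' (F (xprod w * g))) ->
  Span P T p -> Span P' T' (F p).
Proof.
move=> FD F0 HF [l [Hl ->]].
elim: l Hl => [|x l IH] Hl; first by rewrite big_nil F0; exact: Span0.
rewrite big_cons FD; apply: SpanD.
  by case: (Hl x (mem_head _ _)) => ??; apply: HF.
by apply: IH => y yl; apply: Hl; rewrite inE yl orbT.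
Qed.

Lemma Span_mono (P P' : seq nat -> Prop) (T T' : ZX -> Prop) p :
  (forall w, P w -> P' w) -> (forall g, T g -> T' g) -> Span P T p -> Span P' T' p.
Proof.
move=> HP HT; apply: (@Span_map _ _ _ _ id) => // w g Pw Tg.
by apply: Span1; [apply: HP | apply: HT].
Qed.

Lemma Gamma0 : Gamma 0.
Proof. by rewrite -(subrr 1); apply: Gamma_sub; exact: Gamma_one. Qed.
Lemma GammaN g : Gamma g -> Gamma (- g).
Proof. by move=> Hg; rewrite -sub0r; apply: Gamma_sub => //; exact: Gamma0. Qed.
Lemma GammaD a b : Gamma a -> Gamma b -> Gamma (a + b).
Proof. by move=> Ha Hb; rewrite -[b]opprK; apply: Gamma_sub => //; exact: GammaN. Qed.

Lemma comm_sub (R : ringType) (a b x : R) :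
  (a - b) * x - x * (a - b) = (a*x - x*a) - (b*x - x*b).
Proof. by rewrite mulrBl mulrBr !opprB addrACA [RHS]addrACA [- (b*x) + _]addrC. Qed.
Lemma comm_mul (R : ringType) (a b x : R) :
  (a*b)*x - x*(a*b) = a*(b*x - x*b) + (a*x - x*a)*b.
Proof.
rewrite mulrBr mulrBl !mulrA addrA; congr (_ + _).
by rewrite -addrA addNr addr0.
Qed.
Lemma comm_one (R : ringType) (x : R) : 1 * x - x * 1 = 0.
Proof. by rewrite mul1r mulr1 subrr. Qed.

Lemma Gamma_comm c j : Gamma c -> Gamma (comm c (xv j)).
Proof.
elim=> [s hs|| a b _ Ha _ Hb | a b Ga Ha Gb Hb].
- case: s hs => [|a t] // hs.
  have -> : comm (lncomm (a :: t)) (xv j) = lncomm (rcons (a :: t) j).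
    exact: (esym (foldl_rcons (fun c j => comm c (xv j)) (xv a) t j)).
  by apply: Gamma_gen; rewrite size_rcons; apply: (leq_trans hs).
- have -> : comm 1 (xv j) = 0 := comm_one (xv j).
  exact: Gamma0.
- have -> : comm (a - b) (xv j) = comm a (xv j) - comm b (xv j) := comm_sub a b (xv j).
  exact: Gamma_sub.
- have -> : comm (a * b) (xv j) = a * comm b (xv j) + comm a (xv j) * b := comm_mul a b (xv j).
  by apply: GammaD; apply: Gamma_mul.
Qed.

Lemma idR1 (R : ringType) (c x P : R) : c * (x * P) = x * (c * P) + (c*x - x*c) * P.
Proof. by rewrite mulrBl !mulrA addrC addrNK. Qed.
Lemma idR2 (R : ringType) (a b P g : R) :
  a * ((b * P) * g) = b * (a * (P * g)) + ((a * b - b * a) * P) * g.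
Proof. by rewrite mulrBl mulrBl !mulrA addrC addrNK. Qed.

Lemma xprod_consA b v (h : ZX) : xv b * (xprod v * h) = xprod (b :: v) * h.
Proof. rewrite (xprod_cons b v); exact: mulrA. Qed.

Lemma SpanR q : forall c, Gamma c -> Span (fun v => subseq v q) Gamma (c * xprod q).
Proof.
elim: q => [|j q IH] c Gc.
  have -> : c * xprod [::] = xprod [::] * c by rewrite xprod_nil mulr1 mul1r.
  exact: Span1.
have -> : c * xprod (j :: q) = xv j * (c * xprod q) + comm c (xv j) * xprod q.
  rewrite (xprod_cons j q); exact: idR1.
apply: SpanD.
  apply: (@Span_map (fun v => subseq v q) Gamma _ _ (fun x => xv j * x)).
  - by move=> x y; rewrite mulrDr.
  - by rewrite mulr0.
  - move=> w g sw Gg; rewrite xprod_consA; apply: Span1 => //=.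
    by rewrite eqxx.
  - exact: IH.
apply: (Span_mono _ _ (IH _ (Gamma_comm _ Gc))) => // w sw.
exact: (subseq_trans sw (subseq_cons _ _)).
Qed.

Definition Qlo (lo : nat) (v : seq nat) := sorted leq v /\ all (leq lo) v.

Lemma SpanL w : forall a g lo, Gamma g -> sorted leq w -> (lo <= a)%N ->
  all (leq lo) w -> Span (Qlo lo) Gamma (xv a * (xprod w * g)).
Proof.
elim: w => [|b w IH] a g lo Gg sw la alw.
  rewrite xprod_consA.
  by apply: Span1 => //; split => //=; rewrite la.
case: (leqP a b) => ab.
  rewrite xprod_consA; apply: Span1 => //; split.
    by rewrite /= ab.
  by rewrite /= la.
move: alw => /= /andP[lb alw].
have sw' : sorted leq w := path_sorted sw.
have bw : all (leq b) w by move: sw; rewrite /= (path_sortedE leq_trans) => /andP[].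
have -> : xv a * (xprod (b :: w) * g) =
    xv b * (xv a * (xprod w * g)) + (comm (xv a) (xv b) * xprod w) * g.
  rewrite (xprod_cons b w); exact: idR2.
apply: SpanD.
  apply: (@Span_map (Qlo b) Gamma _ _ (fun x => xv b * x)).
  - by move=> x y; rewrite mulrDr.
  - by rewrite mulr0.
  - move=> v h [sv bv] Gh; rewrite xprod_consA; apply: Span1 => //; split.
      by rewrite /= (path_sortedE leq_trans) bv sv.
    rewrite /= lb /=; apply/allP => x xv'; apply: (leq_trans lb).
    exact: (allP bv).
  - by apply: IH => //; apply: ltnW.
apply: (@Span_map (fun v => subseq v w) Gamma _ _ (fun x => x * g)).
- by move=> x y; rewrite mulrDl.
- by rewrite mul0r.
- move=> v h sv Gh.
  have -> : xprod v * h * g = xprod v * (h * g) := esym (mulrA _ _ _).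
  apply: Span1; last exact: Gamma_mul.
  split; first exact: (subseq_sorted leq_trans sv sw').
  apply/allP => x xv'; apply: (allP alw); exact: (mem_subseq sv xv').
- apply: SpanR; exact: (@Gamma_gen [:: a; b]).
Qed.

Definition Srt (v : seq nat) : Prop := sorted leq v.

Lemma SpanN p : Span Srt Gamma p -> Span Srt Gamma (- p).
Proof.
apply: (@Span_map _ _ _ _ (fun x => - x)).
- by move=> x y; rewrite opprD.
- by rewrite oppr0.
- move=> w g sw Gg.
  have -> : - (xprod w * g) = xprod w * (- g) := esym (mulrN _ _).
  apply: Span1 => //; exact: GammaN.
Qed.

Lemma Span_xprod u : Span Srt Gamma (xprod u).
Proof.
elim: u => [|a u IH].
  have -> : xprod [::] = xprod [::] * 1 := esym (mulr1 _).
  apply: Span1 => //; exact: Gamma_one.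
rewrite xprod_cons; apply: (@Span_map Srt Gamma _ _ (fun x => xv a * x)) => //.
- by move=> x y; rewrite mulrDr.
- by rewrite mulr0.
- move=> w g sw Gg; apply: (Span_mono _ _ (SpanL Gg sw (leq0n a) _)) => //.
    by move=> v [].
  by apply/allP.
Qed.

Lemma Span_all p : Span Srt Gamma p.
Proof.
elim/ZX_ind: p => [|x y Hx Hy|m]; first exact: Span0.
  by apply: SpanD => //; apply: SpanN.
rewrite monoE; exact: Span_xprod.
Qed.




Definition tot (F : DS) : ZX := mmap (@idfun ZX) (fun _ => 1) F.
Lemma totD F G : tot (F + G) = tot F + tot G. Proof. exact: mmapD. Qed.
Lemma totB F G : tot (F - G) = tot F - tot G. Proof. exact: mmapB. Qed.
Lemma tot0 : tot 0 = 0. Proof. exact: mmap0. Qed.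
Lemma totU c w : tot << c *g w >> = c. Proof. by rewrite /tot mmapU mulr1. Qed.
Lemma totE F : tot F = \sum_(w <- msupp F) F@_w.
Proof. by rewrite /tot mmapE; apply: eq_bigr => w _; rewrite mulr1. Qed.

Definition TSub (T : ZX -> Prop) := T 0 /\ forall a b, T a -> T b -> T (a - b).

Lemma TSubN T a : TSub T -> T a -> T (- a).
Proof. by move=> [T0 Ts] Ta; rewrite -sub0r; apply: Ts. Qed.
Lemma TSubD T a b : TSub T -> T a -> T b -> T (a + b).
Proof. by move=> HT Ta Tb; rewrite -[b]opprK; apply: HT.2 => //; apply: TSubN. Qed.

Lemma TSub_Gamma : TSub Gamma.
Proof. split; [exact: Gamma0 | exact: Gamma_sub]. Qed.
Lemma TSub_lideal A S : TSub (lideal_gen A S).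
Proof. split; [exact: lideal_gen_0 | exact: lideal_gen_sub]. Qed.

Definition dsumT T := dsum (fun w => lmulset (xprod w) T).

Lemma dsumT0 T : TSub T -> dsumT T 0.
Proof.
move=> [T0 _] w; rewrite mcoeff0; split => // _; exists 0 => //; by rewrite mulr0.
Qed.

Lemma dsumTB T F G : TSub T -> dsumT T F -> dsumT T G -> dsumT T (F - G).
Proof.
move=> HT HF HG w; rewrite mcoeffB; case: (HF w) (HG w) => [F1 F2] [G1 G2]; split.
  move=> sw; case: (F1 sw) => a Ta ->; case: (G1 sw) => b Tb ->.
  by exists (a - b); [apply: HT.2 | rewrite mulrBr].
by move=> nsw; rewrite F2 // G2 // subrr.
Qed.

Lemma dsumTD T F G : TSub T -> dsumT T F -> dsumT T G -> dsumT T (F + G).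
Proof.
move=> HT HF HG; have -> : F + G = F - (0 - G) by rewrite sub0r opprK.
by apply: dsumTB => //; apply: dsumTB => //; apply: dsumT0.
Qed.

Lemma dsumTU T w g : TSub T -> sorted leq w -> T g -> dsumT T << xprod w * g *g w >>.
Proof.
move=> HT sw Tg v; rewrite mcoeffU; case: (eqVneq w v) => [<-|ne] /=.
  rewrite mulr1n; split => [_|/negP //]; by exists g.
rewrite mulr0n; split => // _; exists 0; [exact: HT.1 | by rewrite mulr0].
Qed.

Lemma Span_DS T p : TSub T -> Span Srt T p -> exists F, dsumT T F /\ tot F = p.
Proof.
move=> HT [l [Hl ->]]; elim: l Hl => [|x l IH] Hl.
  by exists 0; rewrite big_nil tot0; split => //; apply: dsumT0.
have [F [HF eF]] : exists F, dsumT T F /\ tot F = \sum_(y <- l) xprod y.1 * y.2.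
  by apply: IH => y yl; apply: Hl; rewrite inE yl orbT.
case: (Hl x (mem_head _ _)) => sx Tx.
exists (<< xprod x.1 * x.2 *g x.1 >> + F); split.
  by apply: dsumTD => //; apply: dsumTU.
by rewrite big_cons totD totU eF.
Qed.

Lemma DS_coef T F w : TSub T -> dsumT T F -> exists2 h, T h & F@_w = xprod w * h.
Proof.
move=> HT HF; case: (HF w) => F1 F2; case: (boolP (sorted leq w)) => sw.
  by case: (F1 sw) => h Th ->; exists h.
by exists 0; [exact: HT.1 | rewrite F2 // mulr0].
Qed.

Lemma DS_uniq F G : dsumT Gamma F -> dsumT Gamma G -> tot F = tot G -> F = G.
Proof.
move=> HF HG e; apply/eqP; rewrite -subr_eq0; apply/eqP.
have HH : dsumT Gamma (F - G) := dsumTB TSub_Gamma HF HG.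
have Ht : tot (F - G) = 0 by rewrite totB e subrr.
move: (F - G) HH Ht => H HH Ht.
have ex w : { h | Gamma h /\ H@_w = xprod w * h }.
  apply: constructive_indefinite_description.
  case: (DS_coef w TSub_Gamma HH) => h Gh Eh; exists h; split; [exact: Gh | exact: Eh].
pose g w := proj1_sig (ex w).
have Hg w : H@_w = xprod w * g w by rewrite /g; case: (proj2_sig (ex w)).
have Hsum : \sum_(w <- msupp H) xprod w * g w = 0.
  rewrite -[RHS]Ht totE; apply: eq_bigr => w _; exact: esym (Hg w).
have Hs w : w \in msupp H -> sorted leq w.
  move=> wH; apply/negPn/negP => nsw.
  have H0 : H@_w = 0 := (HH w).2 nsw.
  by move: wH; rewrite -mcoeff_neq0 H0 eqxx.
have HK w : w \in msupp H -> Kp (g w).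
  by move=> _; apply: Gamma_K; rewrite /g; case: (proj2_sig (ex w)).
have := indep_all (fset_uniq (msupp H)) Hs HK Hsum => Hz.
apply/malgP => w; rewrite mcoeff0; case: (boolP (w \in msupp H)) => [wH|/mcoeff_outdom //].
rewrite Hg (Hz w wH); exact: mulr0.
Qed.




Lemma SpanNT T p : TSub T -> Span Srt T p -> Span Srt T (- p).
Proof.
move=> HT; apply: (@Span_map _ _ _ _ (fun x => - x)).
- by move=> x y; rewrite opprD.
- by rewrite oppr0.
- move=> w g sw Gg.
  have -> : - (xprod w * g) = xprod w * (- g) := esym (mulrN _ _).
  apply: Span1 => //; exact: TSubN.
Qed.

Lemma dsumT_mono (T T' : ZX -> Prop) F : (forall x, T x -> T' x) -> dsumT T F -> dsumT T' F.
Proof.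
move=> HT HF w; case: (HF w) => F1 F2; split => // sw.
by case: (F1 sw) => h Th ->; exists h => //; apply: HT.
Qed.

Lemma lideal_Gamma S x : (forall s, S s -> Gamma s) -> lideal_gen Gamma S x -> Gamma x.
Proof.
move=> HS; elim=> [s Ss||a b _ Ha _ Hb|g a Gg _ Ha]; first exact: HS.
- exact: Gamma0.
- exact: Gamma_sub.
- exact: Gamma_mul.
Qed.

Lemma lideal_I S x : lideal_gen Gamma S x -> lideal_gen (fun _ => True) S x.
Proof.
elim=> [s Ss||a b _ Ha _ Hb|g a Gg _ Ha].
- exact: lideal_gen_S.
- exact: lideal_gen_0.
- exact: lideal_gen_sub.
- exact: lideal_gen_mul.
Qed.

Lemma I_Span S x : lideal_gen (fun _ => True) S x -> Span Srt (lideal_gen Gamma S) x.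
Proof.
elim=> [s Ss||a b _ Ha _ Hb|g a _ _ Ha].
- have -> : s = xprod [::] * s by rewrite xprod_nil mul1r.
  apply: Span1 => //; exact: lideal_gen_S.
- exact: Span0.
- by apply: SpanD => //; apply: SpanNT => //; exact: TSub_lideal.
apply: (@Span_map _ _ _ _ (fun z => g * z) a _ _ _ Ha).
- by move=> a1 b1; rewrite mulrDr.
- by rewrite mulr0.
move=> w h sw Hh.
have -> : g * (xprod w * h) = (g * xprod w) * h := mulrA _ _ _.
apply: (@Span_map Srt Gamma _ _ (fun z => z * h) _ _ _ _ (Span_all _)).
- by move=> a1 b1; rewrite mulrDl.
- by rewrite mul0r.
move=> v c sv Gc.
have -> : xprod v * c * h = xprod v * (c * h) := esym (mulrA _ _ _).
apply: Span1 => //; exact: lideal_gen_mul.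
Qed.

Unset Implicit Arguments.

Theorem corollary2p5 (S : ZX -> Prop) (HS : forall s, S s -> Gamma s) :
  quot_iso (fun _ : ZX => True) (lideal_gen (fun _ => True) S)
    (dsum (fun w => lmulset (xprod w) Gamma))
    (dsum (fun w => lmulset (xprod w) (lideal_gen Gamma S)))
  /\
  (forall w : seq nat, (1 <= size w)%N -> sorted leq w ->
     induces_quot_iso Gamma (lideal_gen Gamma S)
       (lmulset (xprod w) Gamma) (lmulset (xprod w) (lideal_gen Gamma S))
       (fun f => xprod w * f)).
Proof.
have TS := @TSub_lideal Gamma S.
split; last first.
  move=> w _ sw; split.
  - by move=> x Gx; exists x.
  - by move=> x y _ _; exists 0; [exact: lideal_gen_0 | rewrite mulrDr subrr mulr0].
  - by move=> y [f Gf ->]; exists f => //; exists 0; [exact: lideal_gen_0 | rewrite subrr mulr0].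
  move=> x Gx; split; last by move=> Hx; exists x.
  case=> h Hh e.
  have Gh := lideal_Gamma HS Hh.
  have := @indep_all [:: w] (fun _ => x - h) erefl.
  have H1 : forall v, v \in [:: w] -> sorted leq v by move=> v; rewrite inE => /eqP ->.
  have H2 : forall v, v \in [:: w] -> Kp (x - h) by move=> v _; apply: Gamma_K; exact: Gamma_sub.
  move=> /(_ H1 H2); rewrite big_seq1 mulrBr e subrr => /(_ erefl w (mem_head _ _)).
  by move=> /eqP; rewrite subr_eq0 => /eqP ->.
have exr p : exists F, dsumT Gamma F /\ tot F = p.
  exact: Span_DS TSub_Gamma (Span_all p).
pose f p := proj1_sig (constructive_indefinite_description _ (exr p)).
have Hf p : dsumT Gamma (f p) /\ tot (f p) = p by rewrite /f; case: constructive_indefinite_description.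
exists f; split.
- by move=> x _; exact: (Hf x).1.
- move=> x y _ _.
  rewrite (@DS_uniq (f (x + y)) (f x + f y)) ?subrr; first exact: dsumT0.
  + exact: (Hf _).1.
  + by apply: dsumTD; [exact: TSub_Gamma | exact: (Hf _).1 | exact: (Hf _).1].
  + by rewrite totD !(Hf _).2.
- move=> F HF; exists (tot F) => //.
  rewrite (@DS_uniq (f (tot F)) F) ?subrr; first exact: dsumT0.
  + exact: (Hf _).1.
  + exact: HF.
  + by rewrite (Hf _).2.
move=> x _; split.
  move=> HD; rewrite -(Hf x).2 totE; apply: big_ind.
  - exact: lideal_gen_0.
  - by move=> a b Ha Hb; apply: TSubD => //; exact: TSub_lideal.
  move=> w _; case: (DS_coef w TS HD) => h Hh ->.
  by apply: lideal_gen_mul => //; exact: lideal_I.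
move=> HI; have [F [HF eF]] := Span_DS TS (I_Span HI).
have HF' : dsumT Gamma F by apply: (dsumT_mono _ HF) => y; exact: lideal_Gamma.
have efx : f x = F by apply: (DS_uniq (Hf x).1 HF'); rewrite (Hf x).2 eF.
by rewrite efx.
Qed.
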